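(* Let $A$ be a circular $m\times n$ matrix, $b\in\mathbb{Z}_+^m$, $x^*\in Q(A,b)\setminus Q^*(A,b)$, and let $\Gamma$ be a circuit with negative cost in $D(A,x^* )$. Then $p(\Gamma)>0$.
   Context: Notation: $[n]=\{1,\dots,n\}$ with addition mod $n$ (index $0$ identified with $n$); for $a,c\in[n]$ with $t\ge0$ minimal such that $a+t\equiv c\pmod n$, $[a,c)_n=\{a,\dots,a+t-1\}$ (mod $n$). An $m\times n$ $\{0,1\}$-matrix $A$ is circular if for each row $i$ there are $\ell_i\in[n]$ and an integer $2\le k_i\le n-1$ with row $i$ the incidence vector of $[\ell_i,\ell_i+k_i)_n$. $Q(A,b)=\{x\ge0:Ax\ge b\}$, $Q^*(A,b)=\operatorname{conv}(Q(A,b)\cap\mathbb{Z}^n)$. $D(A)$: node set $[n]$ (labels mod $n$); forward arcs $a_i=(\ell_i-1,\ell_i+k_i-1)$ ($i\in[m]$, length $k_i$), $a_{m+j}=(j-1,j)$ ($j\in[n]$, length $1$); reverse arcs $\bar a_i=(\ell_i+k_i-1,\ell_i-1)$ (length $-k_i$), $\bar a_{m+j}=(j,j-1)$ (length $-1$). A circuit is a simple directed circuit; winding number $p(\Gamma)$: $p(\Gamma)n=\sum_{a\in E(\Gamma)}l(a)$. Costs: $\tilde A=\binom{A}{I}$, $d=\binom{b}{0}$, $v$ = last column of $\tilde A$; for $x^*\in Q(A,b)$: $s^*=\tilde Ax^*-d$, $\mu=\lceil\mathbf{1}^Tx^*\rceil-\mathbf{1}^Tx^*$, $c^+(x^* )=\mu(s^*-(1-\mu)v)$,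 $c^-(x^* )=(1-\mu)(s^*+\mu v)$. In $D(A,x^* )$ arc $a_k$ ($k\in[m+n]$) has cost $c^+_k(x^* )$ and $\bar a_k$ has cost $c^-_k(x^* )$; the cost of a circuit is the sum of its arc costs. *)

(* Defs.v *)
From HB Require Import structures.
From mathcomp Require Import all_boot all_order all_algebra.
From mathcomp Require Import reals.
Set Implicit Arguments. Unset Strict Implicit. Unset Printing Implicit Defensive.
Import Order.TTheory GRing.Theory Num.Theory.
Local Open Scope ring_scope.

(* Conventions (0-based): paper column c in [n] is column c-1 : 'I_n here;
   paper node t (mod n) is node (t mod n) in {0,..,n-1} here (paper node n = node 0).
   A row is given by l i = ell_i - 1 (0-based start column) and k i = k_i. *)

Definition in_interval (n l k j : nat) : bool := ((j + n - l) %% n < k)%N.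

Definition circular_rep (R : realType) (m n : nat) (A : 'M[R]_(m, n))
  (l : 'I_m -> 'I_n) (k : 'I_m -> nat) : Prop :=
  forall i : 'I_m, (2 <= k i <= n.-1)%N /\
    forall j : 'I_n, A i j = (in_interval n (l i) (k i) j)%:R.

Definition Qset (R : realType) (m n : nat) (A : 'M[R]_(m, n)) (b : 'I_m -> nat)
  (x : 'cV[R]_n) : Prop :=
  (forall j, 0 <= x j 0) /\ (forall i, (b i)%:R <= (A *m x) i 0).

Definition integral_vec (R : realType) (n : nat) (x : 'cV[R]_n) : Prop :=
  forall j, x j 0 \is a Num.int.

Definition conv_hull (R : realType) (n : nat) (S : 'cV[R]_n -> Prop) (x : 'cV[R]_n) : Prop :=
  exists (r : nat) (p : 'I_r -> 'cV[R]_n) (lam : 'I_r -> R),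
    [/\ forall t, S (p t), forall t, 0 <= lam t, \sum_t lam t = 1
      & x = \sum_t lam t *: p t].

Definition Qstar (R : realType) (m n : nat) (A : 'M[R]_(m, n)) (b : 'I_m -> nat)
  (x : 'cV[R]_n) : Prop :=
  conv_hull (fun y => Qset A b y /\ integral_vec y) x.

(* Arc indices [m+n]: inl i = index i (row of A), inr j = index m+j+1 (identity row).
   An arc of D(A) is an index together with a direction (true = forward a_k,
   false = reverse \bar a_k). *)
Definition darc (m n : nat) := (('I_m + 'I_n) * bool)%type.

Section ArcData.
Variables (m n : nat) (l : 'I_m -> 'I_n) (k : 'I_m -> nat).

Definition fwd_tail (a : 'I_m + 'I_n) : nat :=
  match a with inl i => l i | inr j => j end.
Definition fwd_head (a : 'I_m + 'I_n) : nat :=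
  match a with inl i => ((l i + k i) %% n)%N | inr j => (j.+1 %% n)%N end.
Definition fwd_len (a : 'I_m + 'I_n) : int :=
  match a with inl i => (k i)%:Z | inr _ => 1 end.

Definition arc_tail (e : darc m n) : nat :=
  if e.2 then fwd_tail e.1 else fwd_head e.1.
Definition arc_head (e : darc m n) : nat :=
  if e.2 then fwd_head e.1 else fwd_tail e.1.
Definition arc_len (e : darc m n) : int :=
  if e.2 then fwd_len e.1 else - fwd_len e.1.

(* simple directed circuit: nonempty cyclic sequence of consecutive arcs
   with pairwise distinct tails (hence distinct nodes and arcs) *)
Definition is_circuit (c : seq (darc m n)) : bool :=
  [&& c != [::],
      cycle (fun e1 e2 => arc_head e1 == arc_tail e2) c
    & uniq (map arc_tail c)].

Definition winding (R : realType) (c : seq (darc m n)) : R :=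
  (\sum_(e <- c) arc_len e)%:~R / n%:R.
End ArcData.

Section Costs.
Variables (R : realType) (m n : nat) (A : 'M[R]_(m, n)) (b : 'I_m -> nat) (x : 'cV[R]_n).

Definition tildeA (a : 'I_m + 'I_n) (j : 'I_n) : R :=
  match a with inl i => A i j | inr j' => (j' == j)%:R end.
Definition dvec (a : 'I_m + 'I_n) : R :=
  match a with inl i => (b i)%:R | inr _ => 0 end.
(* v = last column (column n) of \tilde A *)
Definition vlast (a : 'I_m + 'I_n) : R :=
  \sum_(j < n | (j : nat) == n.-1) tildeA a j.
Definition sstar (a : 'I_m + 'I_n) : R := \sum_j tildeA a j * x j 0 - dvec a.
Definition mu : R := let t := \sum_j x j 0 in (Num.ceil t)%:~R - t.
Definition cplus (a : 'I_m + 'I_n) : R := mu * (sstar a - (1 - mu) * vlast a).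
Definition cminus (a : 'I_m + 'I_n) : R := (1 - mu) * (sstar a + mu * vlast a).
Definition arc_cost (e : darc m n) : R := if e.2 then cplus e.1 else cminus e.1.
Definition circuit_cost (c : seq (darc m n)) : R := \sum_(e <- c) arc_cost e.
End Costs.

(* Main.v *)
Require Import Defs.
From HB Require Import structures.
From mathcomp Require Import all_boot all_order all_algebra.
From mathcomp Require Import reals.
From mathcomp Require Import zify ring lra.
Import Order.TTheory GRing.Theory Num.Theory.
Local Open Scope ring_scope.

Lemma path_map_rcons (T U : eqType) (f g : T -> U) (x y : T) (s : seq T) :
  path (fun e1 e2 => f e1 == g e2) x (rcons s y) -> map f (x :: s) = map g (rcons s y).
Proof.
elim: s x => [|z s IH] x /=; first by rewrite andbT => /eqP ->.
by case/andP=> /eqP -> /IH /= ->.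
Qed.

Arguments path_map_rcons {T U f g x y s}.

Lemma mu_bounds (R : realType) (n : nat) (x : 'cV[R]_n) :
  0 <= mu x /\ mu x < 1.
Proof.
rewrite /mu; set t := \sum_j x j 0; split.
  by rewrite subr_ge0 Num.Theory.ceil_ge.
have := Num.Theory.ceilB1_lt t; rewrite intrD /= => h.
rewrite ltrBlDr; move: h; lra.
Qed.

Theorem lemma4p3 (R : realType) (m n : nat) (A : 'M[R]_(m, n))
  (l : 'I_m -> 'I_n) (k : 'I_m -> nat) (b : 'I_m -> nat) (x : 'cV[R]_n)
  (c : seq (darc m n)) :
  circular_rep A l k ->
  Qset A b x -> ~ Qstar A b x ->
  is_circuit l k c ->
  circuit_cost A b x c < 0 ->
  0 < winding k R c.
Proof.
move=> circ [xge Axb] _ /and3P [cne ccyc _] cneg.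
have n0 : (0 < n)%N.
  case: c cne {ccyc cneg} => // [[[i|j] d]] _ _.
    by have := ltn_ord (l i); lia.
  by have := ltn_ord j; lia.
set lenN := fun a : 'I_m + 'I_n => match a with inl i => k i | inr _ => 1%N end.
set vN := fun a : 'I_m + 'I_n => (n <= fwd_tail l a + lenN a)%N.
have lenE a : fwd_len k a = (lenN a)%:Z by case: a.
have vE a : vlast A a = (vN a)%:R.
  have j0P : (n.-1 < n)%N by rewrite prednK.
  rewrite /vlast (big_pred1 (Ordinal j0P)); last by move=> j; rewrite /= /eq_op.
  case: a => [i|j] /=; rewrite /vN /=.
    have [_ ->] := circ i; congr (_%:R); rewrite /in_interval /=.
    have li := ltn_ord (l i).
    have -> : (n.-1 + n - l i = 1 * n + (n.-1 - l i))%N by lia.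
    rewrite modnMDl modn_small; lia.
  rewrite /eq_op /=; congr (_%:R); have := ltn_ord j; lia.
have headE a : (fwd_tail l a + lenN a = fwd_head l k a + vN a * n)%N.
  rewrite /vN; case: a => [i|j] /=.
    have [/andP [_ kn] _] := circ i; have li := ltn_ord (l i).
    case: (leqP n (l i + k i)) => h.
      have -> : (l i + k i = 1 * n + (l i + k i - n))%N by lia.
      rewrite modnMDl modn_small; lia.
    rewrite modn_small; lia.
  have jn := ltn_ord j.
  case: (leqP n (j + 1)) => h.
    have -> : (j.+1 = 1 * n + 0)%N by lia.
    rewrite modnMDl mod0n; lia.
  rewrite modn_small; lia.
set sg := fun e : darc m n => if e.2 then 1 else -1 : int.
have arcE e : sg e * (vN e.1)%:Z * n%:Z
    = (arc_tail l k e)%:Z + arc_len k e - (arc_head l k e)%:Z.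
  have := headE e.1; rewrite /sg /arc_tail /arc_head /arc_len lenE.
  case: e.2 => h /=; lia.
have sumHT : \sum_(e <- c) (arc_head l k e)%:Z = \sum_(e <- c) (arc_tail l k e)%:Z.
  case: c ccyc cne {cneg} => // e s /= cyc _.
  rewrite -(big_map (arc_head l k) xpredT (fun t => t%:Z)).
  rewrite (path_map_rcons cyc) big_map.
  by apply: perm_big; rewrite perm_rcons perm_refl.
have keyZ : \sum_(e <- c) sg e * (vN e.1)%:Z * n%:Z = \sum_(e <- c) arc_len k e.
  rewrite (eq_bigr _ (fun e _ => arcE e)) big_split /= sumrN big_split /=.
  rewrite sumHT; ring.
have keyR : \sum_(e <- c) (sg e)%:~R * vlast A e.1 = winding k R c.
  rewrite /winding -keyZ rmorph_sum /= mulr_suml; apply: eq_bigr => e _.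
  rewrite vE !rmorphM /= mulfK ?pnatr_eq0 -?lt0n //.
have [mu0 mu1] := @mu_bounds _ _ x.
have sge a : 0 <= sstar A b x a.
  rewrite /sstar; case: a => [i|j] /=.
    rewrite subr_ge0; have := Axb i; by rewrite mxE.
  rewrite (bigD1 j) //= eqxx mul1r big1 ?subr0 ?addr0 // => j' /negbTE.
  by rewrite eq_sym => ->; rewrite mul0r.
have costge e : - (mu x * (1 - mu x)) * ((sg e)%:~R * vlast A e.1) <= arc_cost A b x e.
  rewrite /arc_cost /cplus /cminus /sg; have := sge e.1.
  have v0 : 0 <= vlast A e.1 by rewrite vE ler0n.
  case: e.2 => /= s0; rewrite ?mulr1z ?mulrN1z; nra.
have : - (mu x * (1 - mu x)) * winding k R c <= circuit_cost A b x c.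
  rewrite -keyR mulr_sumr; exact: ler_sum.
rewrite ltNge; apply: contraL => wle.
have : 0 <= mu x * (1 - mu x) by nra.
move: cneg; nra.
Qed.
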